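(* Let $F(n)$ be the Fibonacci sequence, $F(0)=0$, $F(1)=1$, $F(n+2)=F(n+1)+F(n)$. Then $$\lim_{\alpha\to\infty}\frac{|\{F(n)\bmod 11^\alpha:n\ge0\}|}{11^\alpha}=\frac{145}{264}.$$ *)

(* Defs.v *)
From HB Require Import structures.
From mathcomp Require Import all_boot all_order all_algebra.
From mathcomp Require Import finmap.
From mathcomp Require Import all_classical all_reals all_analysis.
Set Implicit Arguments. Unset Strict Implicit. Unset Printing Implicit Defensive.

Fixpoint fib (n : nat) : nat :=
  match n with
  | 0 => 0
  | 1 => 1
  | (m.+1 as k).+1 => fib k + fib m
  end.

Definition fib_residues (m : nat) : set nat := [set fib n %% m | n in [set: nat]].

(* its cardinality (it is finite, being contained in [0, m)) *)
Definition num_fib_residues (m : nat) : nat := #|` fset_set (fib_residues m)|.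

(* Main.v *)
Require Import Defs.
From HB Require Import structures.
From mathcomp Require Import all_boot all_order all_algebra.
From mathcomp Require Import finmap.
From mathcomp Require Import all_classical all_reals all_analysis.
From mathcomp Require Import ring zify.
Import Order.TTheory GRing.Theory Num.Theory.

Module FibHelper.
Local Set Implicit Arguments. Local Unset Strict Implicit.
Fixpoint luc (n : nat) : nat :=
  match n with
  | 0 => 2
  | 1 => 1
  | (m.+1 as k).+1 => luc k + luc m
  end.

Definition isrec (G : nat -> nat) := forall n, G n.+2 = G n.+1 + G n.

Lemma fib_rec : isrec fib. Proof. by []. Qed.
Lemma luc_rec : isrec luc. Proof. by []. Qed.

Lemma addfib G (hG : isrec G) m n :
  G (n + m.+1) = fib m.+1 * G n.+1 + fib m * G n.
Proof.
elim: m n => [|m IH] n; first by rewrite addn1 /= mul1n mul0n addn0.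
rewrite -addSnnS IH hG.
have -> : fib m.+2 = fib m.+1 + fib m by [].
lia.
Qed.

Lemma luc_fib n : luc n.+1 = fib n + fib n.+2.
Proof.
elim/ltn_ind: n => [[|[|n]]] IH //.
rewrite luc_rec IH // IH //.
have -> : fib n.+4 = fib n.+3 + fib n.+2 by [].
have -> : fib n.+3 = fib n.+2 + fib n.+1 by [].
have -> : fib n.+2 = fib n.+1 + fib n by [].
lia.
Qed.

Local Open Scope ring_scope.

Lemma cassini n : (fib n.+2)%:Z * (fib n)%:Z - (fib n.+1)%:Z ^+ 2 = (-1) ^+ n.+1.
Proof.
elim: n => [|n IH]; first by [].
have e1 : (fib n.+3)%:Z = (fib n.+2)%:Z + (fib n.+1)%:Z by rewrite -PoszD.
have e2 : (fib n.+2)%:Z = (fib n.+1)%:Z + (fib n)%:Z by rewrite -PoszD.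
rewrite [(-1) ^+ _.+2]exprS -IH e1 e2; ring.
Qed.

Lemma luc_fib_sq n : odd n -> (5 * fib n ^ 2 = luc n ^ 2 + 4)%N.
Proof.
case: n => [//|n] hn.
rewrite luc_fib.
have := cassini n.
move=> h; rewrite -signr_odd hn expr1 in h.
have e2 : fib n.+2 = (fib n.+1 + fib n)%N by [].
rewrite e2 in h *.
apply/eqP; rewrite -(@eqr_nat int) natrM natrX natrD natrX !natrD.
rewrite PoszD in h.
rewrite !natz.
set x := (fib n.+1)%:Z in h *; set y := (fib n)%:Z in h *.
rewrite -subr_eq0; apply/eqP.
transitivity (-4 * (((x + y) * y - x ^+ 2) + 1)); first by ring.
by rewrite h addNr mulr0.
Qed.

Definition per (b : nat) := (10 * 11 ^ b)%N.

Lemma addfibZ G (hG : isrec G) n m :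
  (G (n + m.+1)%N)%:Z = (fib m.+1)%:Z * (G n.+1)%:Z + (fib m)%:Z * (G n)%:Z.
Proof. by rewrite addfib // PoszD !PoszM. Qed.

Lemma per_gt0 b : (0 < per b)%N.
Proof. by rewrite /per muln_gt0 expn_gt0. Qed.

Lemma powJ (b : nat) (U V : int) :
  let e := (11 : int) ^+ b.+1 in
  (fib (per b))%:Z = e * U -> (fib (per b).+1)%:Z = 1 + e * (U + V) ->
  forall k, exists s t : int,
   (fib (k * per b)%N)%:Z = k%:Z * e * U + ('C(k, 2))%:Z * e ^+ 2 * (U ^+ 2 + 2 * U * V)
                          + e ^+ 3 * s /\
   (fib (k * per b)%N.+1)%:Z = 1 + k%:Z * e * (U + V)
          + ('C(k, 2))%:Z * e ^+ 2 * ((U + V) ^+ 2 + U ^+ 2) + e ^+ 3 * t.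
Proof.
move=> e h1 h2.
have hp : per b = (per b).-1.+1 by rewrite prednK // per_gt0.
set q := (per b).-1 in hp.
have hq : (fib q)%:Z = 1 + e * V.
  have : (fib q.+2)%:Z = (fib q.+1)%:Z + (fib q)%:Z by rewrite -PoszD.
  rewrite -hp h1 h2 => h; rewrite -[LHS](addKr (e * U)) -h; ring.
elim=> [|k [s [t [ha hb]]]].
  by exists 0, 0; rewrite mul0n bin0n /=; split; ring.
exists (s + e * V * s + ('C(k, 2))%:Z * V * (U ^+ 2 + 2 * U * V)
          + ('C(k, 2))%:Z * U * ((U + V) ^+ 2 + U ^+ 2) + e * U * t).
exists (t + ('C(k, 2))%:Z * U * (U ^+ 2 + 2 * U * V) + e * U * s
          + ('C(k, 2))%:Z * (U + V) * ((U + V) ^+ 2 + U ^+ 2) + e * (U + V) * t).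
have eb : 'C(k.+1, 2) = ('C(k, 2) + k)%N by rewrite binS bin1 addnC.
rewrite eb PoszD.
have i1 : (k.+1 * per b = k * per b + q.+1)%N by rewrite -hp mulSnr.
have i2 : ((k.+1 * per b).+1 = (k * per b).+1 + q.+1)%N by rewrite i1 addSn.
split.
  rewrite i1 addfibZ // -hp h1 hq ha hb -[k.+1]addn1 PoszD; ring.
rewrite i2 (addfibZ fib_rec) -hp h1 hq.
have -> : (fib (k * per b).+2)%:Z = (fib (k * per b).+1)%:Z + (fib (k * per b))%:Z.
  by rewrite -PoszD.
rewrite ha hb -[k.+1]addn1 PoszD; ring.
Qed.

Lemma pow_inv b : exists u v : int,
  (fib (per b))%:Z = (11 : int) ^+ b.+1 * (5 + 11 * u) /\
  (fib (per b).+1)%:Z = 1 + (11 : int) ^+ b.+1 * (8 + 11 * v).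
Proof.
elim: b => [|b [u [v [h1 h2]]]].
  by exists 0, 0; rewrite /per /=.
set U := 5 + 11 * u; set V := 3 + 11 * (v - u).
have h2' : (fib (per b).+1)%:Z = 1 + (11 : int) ^+ b.+1 * (U + V).
  by rewrite h2 /U /V; congr (_ + _ * _); ring.
have [s [t [ha hb]]] := powJ h1 h2' 11.
have hP : per b.+1 = (11 * per b)%N by rewrite /per expnS mulnCA.
set d := (11 : int) ^+ b.
exists (u + 5 * d * (U ^+ 2 + 2 * U * V) + d ^+ 2 * s).
exists (v + 5 * d * ((U + V) ^+ 2 + U ^+ 2) + d ^+ 2 * t).
rewrite hP ha hb /= !exprS -/d /U /V; have -> : 'C(11, 2) = 55%N by []. split; ring.
Qed.

Lemma shift b G (hG : isrec G) k n : exists e : int,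
  (G (n + k * per b)%N)%:Z = (G n)%:Z + k%:Z * (11 : int) ^+ b.+1 *
     (5 * (G n.+1)%:Z + 3 * (G n)%:Z) + (11 : int) ^+ b.+2 * e.
Proof.
have [u [v [h1 h2]]] := pow_inv b.
set ee := (11 : int) ^+ b.+1 in h1 h2.
have hp : per b = (per b).-1.+1 by rewrite prednK // per_gt0.
set q := (per b).-1 in hp.
have hq : (fib q)%:Z = 1 + ee * (3 + 11 * (v - u)).
  have : (fib q.+2)%:Z = (fib q.+1)%:Z + (fib q)%:Z by rewrite -PoszD.
  rewrite -hp h1 h2 => h; rewrite -[LHS](addKr (ee * (5 + 11 * u))) -h; ring.
have step : forall n, (G (n + per b)%N)%:Z = (G n)%:Z + ee *
     (5 * (G n.+1)%:Z + 3 * (G n)%:Z) + (11 : int) ^+ b.+2 *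
     (u * (G n.+1)%:Z + (v - u) * (G n)%:Z).
  move=> m; rewrite hp addfibZ // -hp h1 hq /ee !exprS; ring.
elim: k n => [|k IH] n.
  by exists 0; rewrite mul0n addn0 mulr0; ring.
have [e1 h3] := IH n; have [e2 h4] := IH n.+1.
have i1 : (n + k.+1 * per b = (n + k * per b) + per b)%N by rewrite mulSnr addnA.
set c := (5 * (G n.+1)%:Z + 3 * (G n)%:Z).
set c' := (5 * (G n.+2)%:Z + 3 * (G n.+1)%:Z) in h4.
set G0 := G (n + k * per b)%N.
exists (e1 + (u * (G (n + k * per b).+1)%:Z + (v - u) * G0%:Z)
   + (11 : int) ^+ b * (5 * k%:Z * c' + 55 * e2 + 3 * k%:Z * c + 33 * e1)).
rewrite i1 step -/G0.
have -> : (n + k * per b).+1 = (n.+1 + k * per b)%N by rewrite addSn.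
rewrite h4 /G0 h3 -[k.+1]addn1 PoszD /ee !exprS; ring.
Qed.

Lemma congr_modn (x y d : nat) (e : int) :
  x%:Z = y%:Z + d%:Z * e -> (x %% d = y %% d)%N.
Proof.
move=> h; suff : ((x %% d)%N%:Z = (y %% d)%N%:Z) by case.
by rewrite -!modz_nat h addrC mulrC modzMDl.
Qed.

Lemma modn_congr (x y d : nat) :
  (x %% d = y %% d)%N -> exists e : int, x%:Z = y%:Z + d%:Z * e.
Proof.
move=> h; exists ((x %/ d)%:Z - (y %/ d)%:Z).
rewrite {1}(divn_eq x d) {1}(divn_eq y d) h !PoszD !PoszM; ring.
Qed.

Lemma fin11 : all (fun i => all (fun j => (j == 0%N) ||
  has (fun k => (i + k * j) %% 11 == 0)%N (iota 0 11)) (iota 0 11)) (iota 0 11).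
Proof. by []. Qed.

Lemma solve11 (e : int) (c : nat) : (c %% 11 != 0)%N ->
  exists k : nat, exists f : int, e + k%:Z * c%:Z = 11 * f.
Proof.
move=> hc.
have h0 : 0 <= (e %% 11)%Z by apply: modz_ge0.
set i := `|(e %% 11)%Z|%N.
have hi : (e %% 11)%Z = i%:Z by rewrite /i gez0_abs.
have hi11 : (i < 11)%N by rewrite -ltz_nat -hi ltz_pmod.
set j := (c %% 11)%N.
have hj11 : (j < 11)%N by rewrite ltn_mod.
have H1 := fin11.
have /allP H2 := H1.
have Hi : i \in iota 0 11 by rewrite mem_iota.
have Hj : j \in iota 0 11 by rewrite mem_iota.
have /allP H3 := H2 i Hi.
have := H3 j Hj.
rewrite (negbTE hc) orFb => /hasP [k _ /eqP hk].
exists k; exists ((e %/ 11)%Z + k%:Z * (c %/ 11)%N%:Z + ((i + k * j) %/ 11)%N%:Z).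
rewrite {1}(divz_eq e 11) hi {1}(divn_eq c 11) -/j.
have : (i + k * j = (i + k * j) %/ 11 * 11)%N by rewrite {1}(divn_eq (i + k * j) 11) hk addn0.
move=> /(congr1 Posz); rewrite PoszD PoszM !PoszM => h.
apply/eqP; rewrite -subr_eq0; apply/eqP.
transitivity (i%:Z + k%:Z * j%:Z - ((i + k * j) %/ 11)%N%:Z * 11); first by rewrite PoszD PoszM; ring.
by rewrite h subrr.
Qed.

Lemma fiber (m P : nat) (G c : nat -> nat) (X : nat -> bool) :
  (forall n k, X n -> X (n + k * P)%N) ->
  (forall n k, X n -> exists e : int, (G (n + k * P)%N)%:Z =
      (G n)%:Z + k%:Z * m%:Z * (c n)%:Z + (11 * m)%N%:Z * e) ->
  (forall n, X n -> (c n %% 11 != 0)%N) ->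
  forall r, (exists n, X n /\ (G n %% m = r %% m)%N) ->
  exists n, X n /\ (G n %% (11 * m) = r %% (11 * m))%N.
Proof.
move=> hX hsh hc r [n [Xn hn]].
have [e1 he1] := modn_congr hn.
have [k [f hf]] := solve11 e1 (hc n Xn).
have [e he] := hsh n k Xn.
exists (n + k * P)%N; split; first exact: hX.
apply: (@congr_modn _ _ _ (f + e)).
rewrite he he1 PoszM.
have -> : r%:Z + m%:Z * e1 + k%:Z * m%:Z * (c n)%:Z + 11%:Z * m%:Z * e
  = r%:Z + m%:Z * (e1 + k%:Z * (c n)%:Z) + 11%:Z * m%:Z * e by ring.
rewrite hf; ring.
Qed.

Lemma fiber_down (m : nat) (G : nat -> nat) (X : nat -> bool) r :
  (exists n, X n /\ (G n %% (11 * m) = r %% (11 * m))%N) ->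
  exists n, X n /\ (G n %% m = r %% m)%N.
Proof.
move=> [n [Xn hn]]; exists n; split => //.
by rewrite -(modn_dvdm _ (dvdn_mull 11 (dvdnn m))) hn modn_dvdm // dvdn_mull.
Qed.

Local Open Scope nat_scope.

Lemma per11 G (hG : isrec G) q n : G (n + 10 * q) %% 11 = G n %% 11.
Proof.
elim: q => [|q IH]; first by rewrite muln0 addn0.
have -> : n + 10 * q.+1 = (n + 10 * q) + 9.+1 by rewrite mulnS; lia.
rewrite addfib // -IH.
have -> : fib 10 * G (n + 10 * q).+1 + fib 9 * G (n + 10 * q)
   = 11 * (5 * G (n + 10 * q).+1 + 3 * G (n + 10 * q)) + G (n + 10 * q).
  by rewrite /=; lia.
by rewrite [11 * _]mulnC modnMDl.
Qed.

Lemma per11' G (hG : isrec G) n : G n %% 11 = G (n %% 10) %% 11.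
Proof. by rewrite {1}(divn_eq n 10) addnC mulnC per11. Qed.

Lemma lin_mod x y x' y' : x %% 11 = x' %% 11 -> y %% 11 = y' %% 11 ->
  (5 * x + 3 * y) %% 11 = (5 * x' + 3 * y') %% 11.
Proof.
move=> hx hy.
rewrite -modnDm -[in RHS]modnDm; congr ((_ + _) %% 11).
  by rewrite -modnMmr hx modnMmr.
by rewrite -modnMmr hy modnMmr.
Qed.

Lemma cmod G (hG : isrec G) n :
  (5 * G n.+1 + 3 * G n) %% 11 = (5 * G (n %% 10).+1 + 3 * G (n %% 10)) %% 11.
Proof.
apply: lin_mod; last exact: per11'.
rewrite per11' // (per11' hG (n %% 10).+1).
by rewrite -addn1 -modnDml addn1.
Qed.

Lemma shiftN b G (hG : isrec G) n k : exists e : int,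
  ((G (n + k * per b))%:Z = (G n)%:Z + k%:Z * (11 ^ b.+1)%:Z *
     (5 * G n.+1 + 3 * G n)%N%:Z + (11 * 11 ^ b.+1)%N%:Z * e)%R.
Proof.
have [e he] := shift b hG k n.
have h : forall c, (11 ^ c)%:Z = (11 : int) ^+ c.
  by elim=> [//|c IH]; rewrite expnS PoszM IH exprS.
by exists e; rewrite he -expnS !h PoszD !PoszM.
Qed.

Definition resG (G : nat -> nat) (j a r : nat) : Prop :=
  exists n, n %% 10 == j /\ G n %% 11 ^ a = r %% 11 ^ a.

Lemma lift_class G (hG : isrec G) j
  (hc : (5 * G j.+1 + 3 * G j) %% 11 != 0) a r :
  resG G j a.+2 r <-> resG G j a.+1 r.
Proof.
split; first by rewrite /resG expnS; apply: fiber_down.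
rewrite /resG [11 ^ a.+2]expnS.
apply: (@fiber _ (per a) G (fun n => 5 * G n.+1 + 3 * G n) (fun n => n %% 10 == j)).
- move=> n k /eqP <-; apply/eqP.
  by rewrite /per mulnCA mulnC addnC modnMDl.
- by move=> n k _; apply: shiftN.
- by move=> n /eqP hn; rewrite cmod // hn.
Qed.

Lemma base_class G (hG : isrec G) j (hj : j < 10) r :
  resG G j 1 r <-> r %% 11 = G j %% 11.
Proof.
rewrite /resG expn1; split.
  by move=> [n [/eqP hn <-]]; rewrite per11' // hn.
by move=> h; exists j; rewrite modn_small // h.
Qed.

Lemma all_class G (hG : isrec G) j (hj : j < 10)
  (hc : (5 * G j.+1 + 3 * G j) %% 11 != 0) a r :
  resG G j a.+1 r <-> r %% 11 = G j %% 11.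
Proof.
elim: a r => [|a IH] r; first exact: base_class.
by rewrite lift_class // IH.
Qed.

Definition qrb (r : nat) := (r %% 11) \in [:: 1; 3; 4; 5; 9].

Definition resS (a r : nat) : Prop :=
  exists x, x %% 11 != 0 /\ x ^ 2 %% 11 ^ a = r %% 11 ^ a.

Lemma sq_fin1 : all (fun i => (i == 0) || qrb (i ^ 2)) (iota 0 11).
Proof. by []. Qed.

Lemma sq_fin2 : all (fun q => ~~ qrb q || has (fun x => (x %% 11 != 0) && (x ^ 2 %% 11 == q)) (iota 0 11)) (iota 0 11).
Proof. by []. Qed.

Lemma base_sq r : resS 1 r <-> qrb r.
Proof.
rewrite /resS expn1; split.
  rewrite /qrb; move=> [x [hx <-]].
  have Hi : x %% 11 \in iota 0 11 by rewrite mem_iota ltn_mod.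
  have /allP H := sq_fin1; have := H _ Hi.
  by rewrite (negbTE hx) /= /qrb modnXm.
move=> hr.
have Hi : r %% 11 \in iota 0 11 by rewrite mem_iota ltn_mod.
have /allP H := sq_fin2; have := H _ Hi.
rewrite /qrb modn_mod -/(qrb r) hr orFb => /hasP [x _ /andP [hx /eqP <-]].
by exists x.
Qed.

Lemma lift_sq a r : resS a.+2 r <-> resS a.+1 r.
Proof.
split; first by rewrite /resS expnS; apply: fiber_down.
rewrite /resS [11 ^ a.+2]expnS.
apply: (@fiber _ (11 ^ a.+1) (fun x => x ^ 2) (fun x => 2 * x) (fun x => x %% 11 != 0)).
- move=> n k; rewrite expnS mulnCA mulnC addnC modnMDl //.
- move=> n k _; exists ((k ^ 2)%:Z * (11 ^ a)%:Z)%R.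
  rewrite !expnS !PoszM !PoszD !PoszM; rewrite -!expnS.
  have h : forall c, (11 ^ c)%:Z = (11 : int) ^+ c.
    by elim=> [//|c IH]; rewrite expnS PoszM IH exprS.
  rewrite !h /= !natz; ring.
- move=> n hn; rewrite -/(dvdn 11 (2 * n)) Euclid_dvdM //.
Qed.

Lemma all_sq a r : resS a.+1 r <-> qrb r.
Proof.
elim: a r => [|a IH] r; first exact: base_sq.
by rewrite lift_sq IH.
Qed.

Local Open Scope nat_scope.
Lemma count_lift (P : pred nat) m q :
  count (fun r => P (r %% m)) (iota 0 (q * m)) = q * count P (iota 0 m).
Proof.
elim: q => [|q IH]; first by [].
rewrite mulSnr iotaD count_cat IH add0n -[q * m]addn0 iotaDl count_map mulSnr.
congr (_ + _); apply: eq_in_count => x; rewrite mem_iota /= => hx.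
by rewrite modnMDl modn_small.
Qed.

Lemma count_bij (m1 m2 : nat) (A B : pred nat) (g : nat -> nat) :
  {in [pred i | (i < m1) && A i] &, injective g} ->
  (forall i, i < m1 -> A i -> g i < m2 /\ B (g i)) ->
  (forall j, j < m2 -> B j -> exists i, i < m1 /\ A i /\ g i = j) ->
  count A (iota 0 m1) = count B (iota 0 m2).
Proof.
move=> ginj gAB gBA.
rewrite -!size_filter -(size_map g).
apply: perm_size; apply: uniq_perm.
- rewrite map_inj_in_uniq ?filter_uniq ?iota_uniq //.
  move=> x y; rewrite !mem_filter !mem_iota /= => /andP [hx1 hx2] /andP [hy1 hy2].
  by apply: ginj; rewrite inE ?hx1 ?hx2 ?hy1 ?hy2.
- by rewrite filter_uniq ?iota_uniq.
move=> y; rewrite mem_filter mem_iota /=.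
apply/mapP/andP.
  move=> [x]; rewrite mem_filter mem_iota /= => /andP [hA hx] ->.
  by have [h1 h2] := gAB x hx hA; split.
move=> [hB hy]; have [x [hx [hA <-]]] := gBA y hy hB.
by exists x => //; rewrite mem_filter mem_iota /= hA hx.
Qed.

Lemma count_disj (a b : pred nat) s :
  (forall r, r \in s -> ~~ (a r && b r)) ->
  count (fun r => a r || b r) s = count a s + count b s.
Proof.
move=> h; rewrite -count_predUI.
rewrite (@eq_in_count _ (predI a b) pred0); first by rewrite count_pred0 addn0.
by move=> r /h /negbTE.
Qed.

Definition six := [:: 0; 1; 2; 3; 8; 10].
Definition isF a r := `[< exists n, fib n %% 11 ^ a = r %% 11 ^ a >].
Definition isR5 a r := `[< resG fib 5 a r >].

Lemma fibfin : all (fun j => (j == 5) ||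
   (((5 * fib j.+1 + 3 * fib j) %% 11 != 0) && (fib j %% 11 \in six))) (iota 0 10).
Proof. by []. Qed.

Lemma fibfin2 : all (fun v => has (fun j => (j != 5) && (fib j %% 11 == v)) (iota 0 10)) six.
Proof. by []. Qed.

Lemma res_mod11 G (hG : isrec G) j a r : j < 10 -> resG G j a.+1 r -> r %% 11 = G j %% 11.
Proof.
move=> hj [n [/eqP hn h]].
have d : 11 %| 11 ^ a.+1 by rewrite expnS dvdn_mulr.
by rewrite -(modn_dvdm r d) -h modn_dvdm // per11' // hn.
Qed.

Lemma decompF a r : isF a.+1 r = (r %% 11 \in six) || isR5 a.+1 r.
Proof.
apply/idP/idP.
  move/asboolP => [n hn].
  set j := n %% 10.
  have hj : j < 10 by rewrite ltn_mod.
  have hres : resG fib j a.+1 r by exists n; split.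
  have /allP H := fibfin.
  have := H j; rewrite mem_iota /= => /(_ hj).
  case: eqP => [e5 _| ne5 /= /andP [hc hs]].
    by apply/orP; right; apply/asboolP; rewrite -e5.
  apply/orP; left.
  by have := (all_class fib_rec hj hc a r).1 hres => ->.
case/orP.
  move=> hs.
  have /allP H := fibfin2.
  have /hasP [j] := H _ hs.
  rewrite mem_iota /= => hj /andP [ne5 /eqP hv].
  have /allP H2 := fibfin.
  have := H2 j; rewrite mem_iota /= => /(_ hj).
  rewrite (negbTE ne5) /= => /andP [hc _].
  have [n [_ hn]] := (all_class fib_rec hj hc a r).2 (esym hv).
  by apply/asboolP; exists n.
by move/asboolP => [n [_ hn]]; apply/asboolP; exists n.
Qed.

Lemma disjF a r : ~~ ((r %% 11 \in six) && isR5 a.+1 r).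
Proof.
apply/negP => /andP [hs /asboolP h].
have := res_mod11 fib_rec (isT : 5 < 10) h.
by move=> e; rewrite e in hs.
Qed.

Lemma countF a : count (isF a.+1) (iota 0 (11 ^ a.+1)) =
   11 ^ a * 6 + count (isR5 a.+1) (iota 0 (11 ^ a.+1)).
Proof.
rewrite (eq_count (decompF a)) count_disj; last by move=> r _; apply: disjF.
congr (_ + _).
by rewrite expnSr (count_lift (fun r => r \in six)).
Qed.

Definition isV a r := `[< exists n, n %% 10 == 5 /\ luc n ^ 2 %% 11 ^ a = r %% 11 ^ a >].

Lemma odd5 n : n %% 10 = 5 -> odd n.
Proof. by move=> h; rewrite (divn_eq n 10) h oddD oddM /= andbF. Qed.

Lemma gval a n r : n %% 10 = 5 -> fib n %% 11 ^ a.+1 = r %% 11 ^ a.+1 ->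
  (5 * r ^ 2 - 4) %% 11 ^ a.+1 = luc n ^ 2 %% 11 ^ a.+1.
Proof.
move=> h5 hr.
have r5 : r %% 11 = 5 by apply: (res_mod11 fib_rec (isT : 5 < 10)); by exists n; split; [rewrite h5 | exact: hr].
have r1 : 4 <= 5 * r ^ 2.
  have : 5 <= r by rewrite -r5 leq_mod.
  by move=> h; nia.
apply/eqP; rewrite -(eqn_modDr 4) subnK // -luc_fib_sq; last exact: odd5.
by rewrite -modnMmr -modnXm -hr modnXm modnMmr.
Qed.

Lemma inj5 a r s : r < 11 ^ a.+1 -> s < 11 ^ a.+1 -> r %% 11 = 5 -> s %% 11 = 5 ->
  (5 * r ^ 2 - 4) %% 11 ^ a.+1 = (5 * s ^ 2 - 4) %% 11 ^ a.+1 -> r = s.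
Proof.
wlog hsr : r s / s <= r.
  move=> H hr hs r5 s5 e.
  case: (leqP s r) => h; first exact: H.
  by apply/esym/H => //; apply: ltnW.
move=> hr hs r5 s5 e.
have s1 : 4 <= 5 * s ^ 2.
  have : 5 <= s by rewrite -s5 leq_mod.
  by move=> h; nia.
have hsq : 5 * s ^ 2 <= 5 * r ^ 2 by rewrite leq_mul2l leq_exp2r // hsr orbT.
have r1 : 4 <= 5 * r ^ 2 by apply: (leq_trans s1).
have e2 : 5 * s ^ 2 = 5 * r ^ 2 %[mod 11 ^ a.+1].
  by rewrite -(subnK r1) -(subnK s1) -modnDml -e modnDml.
have hd : 11 ^ a.+1 %| 5 * r ^ 2 - 5 * s ^ 2.
  by rewrite -eqn_mod_dvd //; apply/eqP.
move: hd; rewrite -mulnBr subn_sqr.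
have cop : coprime (11 ^ a.+1) (5 * (r + s)).
  rewrite coprime_pexpl // coprimeMr /= prime_coprime // /dvdn.
  by rewrite -modnDm r5 s5.
rewrite mulnCA Gauss_dvdl // => hd.
have : r - s == 0.
  case: (posnP (r - s)) => [//|hpos].
  by have := dvdn_leq hpos hd; move: hr; lia.
by move: hsr; lia.
Qed.


Lemma countR5V a : count (isR5 a.+1) (iota 0 (11 ^ a.+1)) = count (isV a.+1) (iota 0 (11 ^ a.+1)).
Proof.
have M0 : 0 < 11 ^ a.+1 by rewrite expn_gt0.
apply: (@count_bij _ _ _ _ (fun r => (5 * r ^ 2 - 4) %% 11 ^ a.+1)).
- move=> r s Hr0 Hs0 e. move: Hr0 Hs0; rewrite !inE /= => /andP [hr /asboolP Hr] /andP [hs /asboolP Hs].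
  apply: (inj5 hr hs) => //.
  + exact: (res_mod11 fib_rec (isT : 5 < 10) Hr).
  + exact: (res_mod11 fib_rec (isT : 5 < 10) Hs).
- move=> r hr /asboolP [n [/eqP h5 hn]]; split; first by rewrite ltn_mod.
  by apply/asboolP; exists n; split; [rewrite h5 | rewrite modn_mod (gval h5 hn)].
- move=> j hj /asboolP [n [/eqP h5 hn]].
  exists (fib n %% 11 ^ a.+1); split; first by rewrite ltn_mod.
  split.
    by apply/asboolP; exists n; split; [rewrite h5 | rewrite modn_mod].
  rewrite (@gval a n) ?h5 ?modn_mod // hn modn_small //.
Qed.

Definition isW a r := `[< exists l, (11 * l) ^ 2 %% 11 ^ a = r %% 11 ^ a >].
Definition isQ a r := `[< exists y, y ^ 2 %% 11 ^ a = r %% 11 ^ a >].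
Definition isU a r := `[< resS a r >].

Lemma VW a r : isV a.+1 r = isW a.+1 r.
Proof.
apply/idP/idP.
  move/asboolP => [n [/eqP h5 hn]]; apply/asboolP; exists (luc n %/ 11).
  have h0 : luc n %% 11 = 0 by rewrite per11' // h5.
  by rewrite -hn mulnC {2}(divn_eq (luc n) 11) h0 addn0.
move/asboolP => [l hl]; apply/asboolP.
have hc : (5 * luc 6 + 3 * luc 5) %% 11 != 0 by [].
have hm : (11 * l) %% 11 = luc 5 %% 11 by rewrite mulnC modnMl.
have [n [h5 hn]] := (all_class luc_rec (isT : 5 < 10) hc a (11 * l)).2 hm.
exists n; split => //.
by rewrite -hl -modnXm hn modnXm.
Qed.

Lemma countW2 a : count (isW a.+2) (iota 0 (11 ^ a.+2)) = count (isQ a) (iota 0 (11 ^ a)).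
Proof.
have e2 : 11 ^ a.+2 = 121 * 11 ^ a by rewrite !expnS mulnA.
symmetry; apply: (@count_bij _ _ _ _ (fun x => 121 * x)).
- by move=> x y _ _ /eqP; rewrite eqn_pmul2l // => /eqP.
- move=> x hx /asboolP [y hy]; split; first by rewrite e2 ltn_pmul2l.
  apply/asboolP; exists y.
  have -> : (11 * y) ^ 2 = 121 * y ^ 2 by rewrite expnMn.
  rewrite e2 -muln_modr // hy modn_small //.
  by rewrite modn_small // ltn_pmul2l.
- move=> j hj /asboolP [l hl].
  exists (l ^ 2 %% 11 ^ a); split; first by rewrite ltn_mod expn_gt0.
  split; first by apply/asboolP; exists l; rewrite modn_mod.
  have e3 : (11 * l) ^ 2 = 121 * l ^ 2 by rewrite expnMn.
  by rewrite muln_modr // -e2 -e3 hl modn_small.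
Qed.

Lemma decompQ a r : isQ a.+1 r = isU a.+1 r || isW a.+1 r.
Proof.
apply/idP/idP.
  move/asboolP => [y hy].
  case: (boolP (y %% 11 == 0)) => h0.
    apply/orP; right; apply/asboolP; exists (y %/ 11).
    by rewrite -hy mulnC {2}(divn_eq y 11) (eqP h0) addn0.
  by apply/orP; left; apply/asboolP; exists y.
case/orP => /asboolP.
  by move=> [y [_ hy]]; apply/asboolP; exists y.
by move=> [l hl]; apply/asboolP; exists (11 * l).
Qed.

Lemma mod11_of a x r : x %% 11 ^ a.+1 = r %% 11 ^ a.+1 -> x %% 11 = r %% 11.
Proof.
have d : 11 %| 11 ^ a.+1 by rewrite expnS dvdn_mulr.
by move=> h; rewrite -(modn_dvdm x d) h modn_dvdm.
Qed.

Lemma sq11 l : (11 * l) ^ 2 %% 11 = 0.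
Proof. by rewrite expnS -mulnA modnMr. Qed.

Lemma disjQ a r : ~~ (isU a.+1 r && isW a.+1 r).
Proof.
apply/negP => /andP [/asboolP hU /asboolP [l hl]].
have := (all_sq a r).1 hU; rewrite /qrb.
have := mod11_of hl; rewrite sq11 => <-.
by [].
Qed.

Definition qrl := [:: 1; 3; 4; 5; 9].

Lemma countU a : count (isU a.+1) (iota 0 (11 ^ a.+1)) = 11 ^ a * 5.
Proof.
rewrite (@eq_count _ _ (fun r => (r %% 11) \in qrl)); last first.
  move=> r; apply/idP/idP; first by move/asboolP/all_sq.
  by move=> h; apply/asboolP; apply/all_sq.
by rewrite expnSr (count_lift (fun r => r \in qrl)).
Qed.

Lemma countW1 : count (isW 1) (iota 0 11) = 1.
Proof.
rewrite (@eq_count _ _ (fun r => r %% 11 == 0)); first by [].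
move=> r; rewrite /isW expn1; apply/idP/idP.
  move/asboolP => [l <-]; apply/eqP.
  by rewrite sq11.
by move/eqP => h; apply/asboolP; exists 0; rewrite h.
Qed.

Definition Qc a := count (isQ a) (iota 0 (11 ^ a)).

Lemma Qc0 : Qc 0 = 1.
Proof. have h : isQ 0 0 by apply/asboolP; exists 0. by rewrite /Qc /= h. Qed.

Lemma QcS a : Qc a.+1 = 11 ^ a * 5 + count (isW a.+1) (iota 0 (11 ^ a.+1)).
Proof.
rewrite /Qc (eq_count (decompQ a)) count_disj; last by move=> r _; apply: disjQ.
by rewrite countU.
Qed.

Lemma Qc_formula a : 24 * Qc a = 11 ^ a.+1 + (if odd a then 23 else 13).
Proof.
elim/ltn_ind: a => [[|[|a]]] IH.
- by rewrite Qc0.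
- by rewrite QcS countW1.
rewrite QcS countW2 -/(Qc a) mulnDr IH // /=.
rewrite negbK !expnS; lia.
Qed.

Definition Nc a := count (isF a) (iota 0 (11 ^ a)).

Lemma Nc_formula a : 264 * Nc a.+1 = 145 * 11 ^ a.+1 + (if odd a.+1 then 253 else 143).
Proof.
rewrite /Nc countF countR5V (eq_count (VW a)).
case: a => [|b]; first by rewrite countW1.
rewrite countW2 -/(Qc b).
have := Qc_formula b.
rewrite /= negbK !expnS; case: (odd b); lia.
Qed.

Local Open Scope classical_set_scope.
Lemma num_res_count m : (0 < m)%N ->
  num_fib_residues m = count (fun r => `[< exists n, fib n %% m = r %% m >]) (iota 0 m).
Proof.
move=> m0.
set P := (fun r => `[< exists n, fib n %% m = r %% m >]).
set s := seq.filter P (iota 0 m).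
have e : fib_residues m = [set` [fset x in s]%fset].
  apply/seteqP; split => x /=.
    move=> [n _ <-]; rewrite inE mem_filter mem_iota /= ltn_mod m0 andbT.
    by apply/asboolP; exists n; rewrite modn_mod.
  rewrite inE mem_filter mem_iota /= => /andP [/asboolP [n hn] hx].
  by exists n => //; rewrite hn modn_small.
rewrite /num_fib_residues e set_fsetK card_fseq undup_id ?size_filter //.
by rewrite filter_uniq // iota_uniq.
Qed.

End FibHelper.

Local Open Scope classical_set_scope.
Local Open Scope ring_scope.

Theorem theorem5p7 (R : realType) :
  (fun a : nat => (num_fib_residues (11 ^ a)%N)%:R / ((11 ^ a)%N)%:R : R)
    @ \oo --> ((145%:R / 264%:R : R) : R^o).
Proof.
have hN : forall a, num_fib_residues (11 ^ a.+1)%N = FibHelper.Nc a.+1.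
  by move=> a; rewrite FibHelper.num_res_count ?expn_gt0.
set l := (145%:R / 264%:R : R).
have hq : `|(11%:R^-1 : R)| < 1.
  by rewrite ger0_norm ?invr_ge0 ?ler0n // invf_lt1 ?ltr0n // ltr1n.
apply: (@squeeze_cvgr _ _ _ R (fun _ => l) (fun a : nat => l + (11%:R^-1 : R) ^+ a)).
- exists 1%N => // a /= ha.
  case: a ha => // a _.
  rewrite hN.
  have F := FibHelper.Nc_formula a.
  set c := (if odd a.+1 then 253 else 143)%N in F.
  have hc : (c <= 264)%N by rewrite /c; case: odd.
  set t := ((11 ^ a.+1)%N%:R : R).
  have tpos : 0 < t by rewrite ltr0n expn_gt0.
  have eN : (FibHelper.Nc a.+1)%:R = ((145%:R * t + c%:R) / 264%:R : R).
    by rewrite -natrM -natrD -F natrM [264%:R * _]mulrC mulfK // pnatr_eq0.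
  have e11 : (11%:R^-1 : R) ^+ a.+1 = t^-1 by rewrite exprVn /t natrX.
  rewrite eN e11.
  have -> : (145%:R * t + c%:R) / 264%:R / t = l + (c%:R / 264%:R) / t.
    by rewrite /l; field; rewrite pnatr_eq0 expn_eq0.
  have h0 : 0 <= (c%:R / 264%:R : R) / t by rewrite !divr_ge0 // ltW.
  have h1 : (c%:R / 264%:R : R) / t <= t^-1.
    rewrite ler_pdivrMr // mulVf ?gt_eqF //.
    by rewrite ler_pdivrMr ?ltr0n // mul1r ler_nat.
  by rewrite lerDl h0 lerD2l h1.
- exact: (@cvg_cst R^o l _ _ eventually_filter).
- have := cvgD (@cvg_cst R^o l _ _ eventually_filter) (@cvg_expr R _ hq).
  rewrite addr0 => H; exact: (H eventually_filter).
Qed.
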